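(* Let $M\subseteq[r]^d$ be a dot array satisfying (P1) and (P3), and suppose $M$ contains a sparse permutation array $P$ of rank $r$ and dimension $d$. Then $M=\overline P$.
   Context: Let $[r]=\{0,\dots,r\}$. $[r]^d$ is partially ordered coordinatewise, with meet $\mathbf x\wedge\mathbf y=(\min(x_i,y_i))_i$. A dot array is a subset of $[r]^d$. Let $\mathrm{rk}_iP$ be one less than the number of distinct values of the $i$-th coordinate among elements of $P$. $P$ is rankable of rank $s$ if all $\mathrm{rk}_iP=s$. $P$ is totally rankable if every principal subarray $P[\mathbf x]=\{\mathbf y\in P:\mathbf y\succeq\mathbf x\}$ is rankable. A point $\mathbf x\in[r]^d$ is redundant for $P$ if $\mathbf x=\bigwedge\mathcal H$ for some $\mathcal H\subseteq P$ with $|\mathcal H|\ge2$ such that every member of $\mathcal H$ shares at least one coordinate with $\mathbf x$. $R(P)$ is the set of redundant points. A permutation array of rank $r$ and dimension $d$ is a totally rankable $P\subseteq[r]^d$ of rank $r$ containing no redundant point. Its redundant closure is $\overline P=P\cup R(P)$. A permutation array is sparse if for every coordinate $i$ and every $c\in[r]$ exactly one element of $P$ has $i$-th coordinate $c$. Properties of a dot array $M$: (P1) $M$ is closed under the meet $\wedge$. (P3) every set $S$ of $r+2$ elements of $M$ contains a subset $S'$ (with at least two elements) such that for every $1\le i\le d$ the value $\min\{x_i:\mathbf x\in S'\}$ is attained by at least two elements of $S'$. *)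

(* Defs.v *)
From mathcomp Require Import all_boot all_order all_algebra.
Set Implicit Arguments. Unset Strict Implicit. Unset Printing Implicit Defensive.

(* Points of [r]^d, where [r] = {0,...,r} is 'I_r.+1 and coordinates are 'I_d. *)
Definition point (r d : nat) := {ffun 'I_d -> 'I_r.+1}.

Section DotArrays.
Variables r d : nat.
Local Notation pt := (point r d).

Definition pt_le (x y : pt) : bool := [forall i, x i <= y i].

Definition pt_meet (x y : pt) : pt := [ffun i => inord (minn (x i) (y i))].

Definition pt_top : pt := [ffun _ => ord_max].

Definition set_meet (H : {set pt}) : pt := \big[pt_meet/pt_top]_(y in H) y.

Definition rk (P : {set pt}) (i : 'I_d) : int :=
  (#|[set (y : pt) i | y in P]|%:Z - 1)%R.

Definition rankable_of_rank (P : {set pt}) (s : int) : Prop :=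
  forall i : 'I_d, rk P i = s.

Definition rankable (P : {set pt}) : Prop := exists s : int, rankable_of_rank P s.

Definition principal (P : {set pt}) (x : pt) : {set pt} :=
  [set y in P | pt_le x y].

Definition totally_rankable (P : {set pt}) : Prop :=
  forall x : pt, rankable (principal P x).

Definition redundant (P : {set pt}) (x : pt) : bool :=
  [exists H : {set pt}, [&& H \subset P, 2 <= #|H|, x == set_meet H &
     [forall y in H, [exists i : 'I_d, y i == x i]]]].

Definition redundant_set (P : {set pt}) : {set pt} :=
  [set x | redundant P x].

Definition permutation_array (P : {set pt}) : Prop :=
  [/\ totally_rankable P, rankable_of_rank P r%:Z &
      forall x, x \in P -> ~ redundant P x].

Definition redundant_closure (P : {set pt}) : {set pt} :=
  P :|: redundant_set P.

Definition sparse (P : {set pt}) : Prop :=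
  forall (i : 'I_d) (c : 'I_r.+1), #|[set y in P | y i == c]| = 1.

Definition P1 (M : {set pt}) : Prop :=
  forall x y, x \in M -> y \in M -> pt_meet x y \in M.

Definition P3 (M : {set pt}) : Prop :=
  forall S : {set pt}, S \subset M -> #|S| = r.+2 ->
    exists S' : {set pt}, [/\ S' \subset S, 2 <= #|S'| &
      forall i : 'I_d,
        2 <= #|[set x in S' | x i == (set_meet S') i]| ].

End DotArrays.

(* Main.v *)
Require Import Defs.
From mathcomp Require Import all_boot all_order all_algebra.
Set Implicit Arguments. Unset Strict Implicit. Unset Printing Implicit Defensive.

Lemma meetE r d (x y : point r d) i : (pt_meet x y i : nat) = minn (x i) (y i).
Proof. by rewrite ffunE inordK // ltnS (leq_trans (geq_minl _ _)) // -ltnS. Qed.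

Lemma set_meetE r d (H : {set point r d}) i :
  (set_meet H i : nat) = \big[minn/r]_(y in H) (y i : nat).
Proof.
rewrite /set_meet.
apply: (big_morph (fun p : point r d => (p i : nat))).
- by move=> a b; rewrite meetE.
- by rewrite ffunE.
Qed.

Lemma bigmin_le_seq (T : eqType) (s : seq T) (P : pred T) (F : T -> nat) r x :
  x \in s -> P x -> (\big[minn/r]_(y <- s | P y) F y <= F x)%N.
Proof.
elim: s => [//|a s IH]; rewrite in_cons big_cons => /orP [/eqP<- ->|xs Px].
  exact: geq_minl.
case: (P a); last exact: IH.
exact: leq_trans (geq_minr _ _) (IH xs Px).
Qed.

Lemma bigmin_le r d (H : {set point r d}) i z : z \in H ->
  (\big[minn/r]_(y in H) (y i : nat) <= z i)%N.
Proof.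
move=> zH; apply: (@bigmin_le_seq _ _ (fun y => y \in H) (fun y : point r d => (y i : nat))) => //.
Qed.

Lemma sparse_inj r d (P : {set point r d}) i y z : sparse P -> y \in P -> z \in P ->
  y i = z i -> y = z.
Proof.
move=> sp yP zP eyz; have /cards1P [w Hw] : #|[set u in P | u i == z i]| == 1 by rewrite sp.
have : y \in [set u in P | u i == z i] by rewrite inE yP eyz eqxx.
have : z \in [set u in P | u i == z i] by rewrite inE zP eqxx.
by rewrite Hw !inE => /eqP-> /eqP->.
Qed.

Lemma card_sparse r d (P : {set point r d}) : 0 < d -> sparse P -> #|P| = r.+1.
Proof.
move=> d0 sp; pose i0 := Ordinal d0.
rewrite -(card_in_imset (f := fun y : point r d => y i0)); last first.
  by move=> y z yP zP; apply: sparse_inj sp yP zP.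
suff -> : [set (y : point r d) i0 | y in P] = [set: 'I_r.+1] by rewrite cardsT card_ord.
apply/setP => c; rewrite inE; apply/imsetP.
have /cards1P [w Hw] : #|[set u in P | u i0 == c]| == 1 by rewrite sp.
have : w \in [set u in P | u i0 == c] by rewrite Hw set11.
by rewrite inE => /andP [wP /eqP <-]; exists w.
Qed.

Lemma meet_top r d (x : point r d) : pt_meet x (pt_top r d) = x.
Proof.
apply/ffunP=> i; apply: val_inj; rewrite /= meetE ffunE /=.
by apply/minn_idPl; rewrite -ltnS.
Qed.

Lemma top_meet r d (x : point r d) : pt_meet (pt_top r d) x = x.
Proof.
apply/ffunP=> i; apply: val_inj; rewrite /= meetE ffunE /=.
by apply/minn_idPr; rewrite -ltnS.
Qed.

Lemma set_meet_in r d (M H : {set point r d}) : P1 M -> H \subset M -> H != set0 ->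
  set_meet H \in M.
Proof.
move=> m1 sHM /set0Pn [h hH].
have : set_meet H \in M \/ set_meet H = pt_top r d.
  rewrite /set_meet; apply: (big_ind (fun v => v \in M \/ v = pt_top r d)).
  - by right.
  - move=> a b [aM|->] [bM|->].
    + by left; apply: m1.
    + by left; rewrite meet_top.
    + by left; rewrite top_meet.
    + by right; rewrite meet_top.
  - by move=> y yH; left; apply: (subsetP sHM).
case=> // Htop.
suff -> : set_meet H = h by apply: (subsetP sHM).
rewrite Htop; apply/ffunP => i; apply: val_inj; rewrite ffunE /=.
have := bigmin_le i hH; rewrite -set_meetE Htop ffunE /= => le1.
by apply/eqP; rewrite eqn_leq le1 -ltnS ltn_ord.
Qed.

Theorem mainTheorem2 (r d : nat) (M P : {set point r d}) :
  0 < d ->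
  P1 M -> P3 M ->
  P \subset M -> permutation_array P -> sparse P ->
  M = redundant_closure P.
Proof.
move=> d0 m1 m3 sPM _ sp.
apply/setP => x; rewrite /redundant_closure !inE.
apply/idP/idP; last first.
  case/orP=> [/(subsetP sPM) //|].
  case/existsP => H /and4P [sHP cH /eqP -> _].
  apply: set_meet_in m1 _ _ .
  - exact: subset_trans sHP sPM.
  - by rewrite -card_gt0 (leq_trans _ cH).
move=> xM; case xP: (x \in P) => //=.
pose S := x |: P.
have SM : S \subset M by rewrite subUset sub1set xM sPM.
have cS : #|S| = r.+2 by rewrite cardsU1 xP card_sparse.
have [S' [sS' cS' H3]] := m3 S SM cS.
pose m := set_meet S'.
have mle : forall z i, z \in S' -> (m i <= z i)%N.
  by move=> z i zS; rewrite /m set_meetE; apply: bigmin_le.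
have inS : forall u, u \in S' -> u = x \/ u \in P.
  by move=> u /(subsetP sS'); rewrite !inE => /orP [/eqP->|]; [left|right].
have key : forall i, x i = m i /\ exists2 h, h \in P :&: S' & h i = x i.
  move=> i; have /card_gt1P [y [z [yT zT yz]]] := H3 i.
  move: yT zT; rewrite !inE => /andP [yS /eqP ym] /andP [zS /eqP zm].
  case: (inS y yS) => [ey|yP]; case: (inS z zS) => [ez|zP].
  - by move: yz; rewrite ey ez eqxx.
  - split; first by rewrite -ey.
    by exists z; rewrite ?inE ?zP ?zS // zm -ym ey.
  - split; first by rewrite -ez.
    by exists y; rewrite ?inE ?yP ?yS // ym -zm ez.
  - by move: yz; rewrite (sparse_inj sp yP zP (etrans ym (esym zm))) eqxx.
pose H' := [set h in P :&: S' | [exists i, h i == x i]].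
apply/existsP; exists H'; apply/and4P; split.
- by apply/subsetP => h; rewrite !inE => /andP [/andP [] ].
- have [h0 h0H e0] := (key (Ordinal d0)).2.
  have h0H' : h0 \in H' by rewrite inE h0H; apply/existsP; exists (Ordinal d0); rewrite e0.
  have : h0 != x by apply/eqP => e; move: h0H; rewrite e inE xP.
  move=> ne; have /existsP [i ni] : [exists i, h0 i != x i].
    apply: contraR ne; rewrite negb_exists => /forallP al.
    by apply/eqP/ffunP => i; apply/eqP; rewrite -[_ == _]negbK; apply: al.
  have [hi hiH ei] := (key i).2.
  apply/card_gt1P; exists h0, hi; split => //.
    by rewrite inE hiH; apply/existsP; exists i; rewrite ei.
  by apply: contraNneq ni => ->; rewrite ei.
- apply/eqP/ffunP => i; apply: val_inj; rewrite /= set_meetE.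
  have [hi hiH ei] := (key i).2.
  have hiH' : hi \in H' by rewrite inE hiH; apply/existsP; exists i; rewrite ei.
  apply/eqP; rewrite eqn_leq; apply/andP; split.
    apply: (big_ind (fun v => x i <= v)%N).
    - by rewrite -ltnS ltn_ord.
    - by move=> a b xa xb; rewrite leq_min xa xb.
    - move=> y; rewrite !inE => /andP [/andP [_ yS] _].
      by rewrite (key i).1; apply: mle.
  by rewrite -ei; apply: bigmin_le.
- apply/forallP => y; apply/implyP; rewrite inE => /andP [_ ->] //.
Qed.
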